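(* Let $N$ be a finite set, $C\subseteq N$ with $|C|\ge2$, and $k\in\{1,\ldots,|C|-1\}$. The set function $m_{C,k}(S)=\max\{0,|S\cap C|-k\}$, $S\subseteq N$, is an extreme standardized supermodular function, and the objective $o(a|B)=m_{C,k}(\{a\}\cup B)-m_{C,k}(B)$, $(a|B)\in\Upsilon$, is exactly the objective of the $k$-cluster inequality $$\sum_{a\in C}\ \sum_{B\subseteq N\setminus\{a\}:\,|B\cap C|\ge k}\eta(a|B)\le |C|-k,$$ i.e. $o(a|B)=1$ if $a\in C$ and $|B\cap C|\ge k$, and $o(a|B)=0$ otherwise; moreover $\langle o,\eta_H\rangle=|C|-k$ for every full graph $H$ over $N$.
   Context: $\Upsilon=\{(a|B): a\in N,\ \emptyset\neq B\subseteq N\setminus\{a\}\}$; for an acyclic directed graph $G$ over $N$ with parent sets $\mathrm{pa}_G(a)$, $\eta_G\in\mathbb{R}^{\Upsilon}$ has $\eta_G(a|B)=1$ if $B=\mathrm{pa}_G(a)$, else $0$. A full graph is an acyclic directed graph over $N$ in which every pair of distinct nodes is adjacent. A set function $m:\mathcal{P}(N)\to\mathbb{R}$ is standardized if $m(S)=0$ for $|S|\le 1$, supermodular if $m(U)+m(V)\le m(U\cup V)+m(U\cap V)$ for all $U,V\subseteq N$; it is extreme if it generates an extreme ray of the (pointed polyhedral) cone of standardized supermodular functions. *)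

(* Defs.v *)
From mathcomp Require Import all_boot all_order all_algebra.
Set Implicit Arguments. Unset Strict Implicit. Unset Printing Implicit Defensive.
Import Order.TTheory GRing.Theory Num.Theory.
Local Open Scope ring_scope.

Section Defs.
Variables (R : realFieldType) (N : finType).

Definition standardized (m : {set N} -> R) : Prop :=
  forall S : {set N}, (#|S| <= 1)%N -> m S = 0.

Definition supermodular (m : {set N} -> R) : Prop :=
  forall U V : {set N}, m U + m V <= m (U :|: V) + m (U :&: V).

Definition std_supermod (m : {set N} -> R) : Prop :=
  standardized m /\ supermodular m.

Definition extreme (m : {set N} -> R) : Prop :=
  [/\ std_supermod m, (exists S, m S != 0) &
      forall m1 m2 : {set N} -> R, std_supermod m1 -> std_supermod m2 ->
        (forall S, m S = m1 S + m2 S) ->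
        exists l : R, 0 <= l /\ forall S, m1 S = l * m S].

(* directed graphs over N as edge relations; g b a means b -> a *)
Definition acyclic (g : rel N) : Prop :=
  forall a b : N, g a b -> ~~ connect g b a.

Definition full_graph (g : rel N) : Prop :=
  acyclic g /\ forall a b : N, a != b -> g a b || g b a.

Definition pa (g : rel N) (a : N) : {set N} := [set b | g b a].

Definition in_Upsilon (a : N) (B : {set N}) : bool := (a \notin B) && (B != set0).

Definition eta (g : rel N) (a : N) (B : {set N}) : R :=
  if B == pa g a then 1 else 0.

Definition pairing (o e : N -> {set N} -> R) : R :=
  \sum_(a : N) \sum_(B : {set N} | in_Upsilon a B) o a B * e a B.

Definition mCk (C : {set N}) (k : nat) (S : {set N}) : R :=
  Num.max 0 (#|S :&: C|%:R - k%:R).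

Definition obj (m : {set N} -> R) (a : N) (B : {set N}) : R :=
  m (a |: B) - m B.

End Defs.

(* Main.v *)
Require Import Defs.
From mathcomp Require Import all_boot all_order all_algebra.
From mathcomp Require Import ring lra zify.
Import Order.TTheory GRing.Theory Num.Theory.
Local Open Scope ring_scope.

Lemma maxcase (R : realFieldType) (x : R) :
  (0 <= x /\ Num.max 0 x = x) \/ (x < 0 /\ Num.max 0 x = 0).
Proof. rewrite maxEle; case: leP => h; [left|right]; done. Qed.

Arguments maxcase {R}.
Section S.
Variables (R : realFieldType) (N : finType) (C : {set N}) (k : nat).
Hypothesis k1 : (1 <= k)%N.
Local Notation m := (mCk R C k).

Lemma set_ind' (P : {set N} -> Prop) : P set0 ->
  (forall (i : N) (T : {set N}), i \notin T -> P T -> P (i |: T)) -> forall S, P S.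
Proof.
move=> P0 PS S; move: {2}#|S| (leqnn #|S|) => n; elim: n S => [|n IH] S hS.
  by move: hS; rewrite leqn0 cards_eq0 => /eqP ->.
case: (set_0Vmem S) => [->//|[i iS]]; rewrite -(setD1K iS); apply: PS.
  by rewrite !inE eqxx.
by apply: IH; move: hS; rewrite (cardsD1 i S) iS add1n ltnS.
Qed.

Lemma obj_val (a : N) (B : {set N}) : a \notin B ->
  obj m a B = if (a \in C) && (k <= #|B :&: C|)%N then 1 else 0.
Proof.
move=> aB; rewrite /obj /mCk.
have -> : #|(a |: B) :&: C| = ((a \in C) + #|B :&: C|)%N.
  rewrite setIUl; case: (boolP (a \in C)) => aC.
    have -> : [set a] :&: C = [set a] by apply/setIidPl; rewrite sub1set.
    by rewrite cardsU1 !inE (negbTE aB).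
  have -> : [set a] :&: C = set0.
    by apply/setP => x; rewrite !inE; case: eqP => // ->; rewrite (negbTE aC).
  by rewrite set0U.
case: (a \in C) => /=; last by rewrite add0n subrr.
set n := #|B :&: C|; rewrite natrD.
case: leqP => h.
  have hk : (k%:R <= n%:R :> R) by rewrite ler_nat.
  by have [[? ->]|[? ->]] := maxcase (1 + n%:R - k%:R : R); have [[? ->]|[? ->]] := maxcase (n%:R - k%:R : R); lra.
have hk : (n%:R + 1 <= k%:R :> R) by rewrite natr1 ler_nat.
by have [[? ->]|[? ->]] := maxcase (1 + n%:R - k%:R : R); have [[? ->]|[? ->]] := maxcase (n%:R - k%:R : R); lra.
Qed.

Lemma m_std : std_supermod m.
Proof.
split.
  move=> S hS; rewrite /mCk.
  have h1 : (#|S :&: C| <= 1)%N by apply: leq_trans hS; apply: subset_leq_card; apply: subsetIl.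
  have ha : (#|S :&: C|%:R <= 1%:R :> R) by rewrite ler_nat.
  have hb : (1%:R <= k%:R :> R) by rewrite ler_nat.
  by have [[? ->]|[? ->]] := maxcase (#|S :&: C|%:R - k%:R : R); lra.
move=> U V; rewrite /mCk.
have e : (#|(U :|: V) :&: C| + #|(U :&: V) :&: C| = #|U :&: C| + #|V :&: C|)%N.
  have -> : (U :&: V) :&: C = (U :&: C) :&: (V :&: C).
    by apply/setP => x; rewrite !inE; case: (x \in C); rewrite ?andbF ?andbT.
  by rewrite setIUl cardsUI.
have qx : (#|(U :&: V) :&: C| <= #|U :&: C|)%N.
  by apply: subset_leq_card; apply: setSI; apply: subsetIl.
have qy : (#|(U :&: V) :&: C| <= #|V :&: C|)%N.
  by apply: subset_leq_card; apply: setSI; apply: subsetIr.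
move: e qx qy.
set p := #|(U :|: V) :&: C|; set q := #|(U :&: V) :&: C|.
set x := #|U :&: C|; set y := #|V :&: C|.
move=> e; rewrite -(ler_nat R) -[(q <= y)%N](ler_nat R) => qx qy.
have e' : (p%:R + q%:R = x%:R + y%:R :> R) by rewrite -!natrD e.
have [[? ->]|[? ->]] := maxcase (x%:R - k%:R : R); have [[? ->]|[? ->]] := maxcase (y%:R - k%:R : R);
have [[? ->]|[? ->]] := maxcase (p%:R - k%:R : R); have [[? ->]|[? ->]] := maxcase (q%:R - k%:R : R); lra.
Qed.


Definition D (f : {set N} -> R) (i : N) (T : {set N}) := f (i |: T) - f T.

Lemma D_ge0 {f : {set N} -> R} : std_supermod f -> forall i T, 0 <= D f i T.
Proof.
move=> [st sm] i T; rewrite /D.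
have := sm T [set i]; rewrite setUC (st [set i]) ?cards1 //.
rewrite (st (T :&: [set i])); first by lra.
by rewrite -(cards1 i); apply: subset_leq_card; apply: subsetIr.
Qed.

Lemma D_mono {f : {set N} -> R} : std_supermod f -> forall i (T T' : {set N}),
  T \subset T' -> i \notin T' -> D f i T <= D f i T'.
Proof.
move=> [st sm] i T T' TT' iT'; rewrite /D.
have := sm (i |: T) T'.
have -> : (i |: T) :|: T' = i |: T' by rewrite -setUA (setUidPr TT').
have -> : (i |: T) :&: T' = T.
  apply/setP=> x; rewrite !inE; case: (eqVneq x i) => [->|_] /=.
    rewrite (negbTE iT'); apply/esym/negbTE; apply: contra iT'; exact: (subsetP TT').
  by case xT: (x \in T) => //=; exact: (subsetP TT').
lra.
Qed.

Lemma f_ge0 {f : {set N} -> R} : std_supermod f -> forall S, 0 <= f S.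
Proof.
move=> hf; apply: set_ind'; first by rewrite (hf.1 set0) ?cards0.
move=> i T _ h; have := D_ge0 hf i T; rewrite /D; lra.
Qed.

Section Ext.
Variables m1 m2 : {set N} -> R.
Hypotheses (h1 : std_supermod m1) (h2 : std_supermod m2)
  (hs : forall S, m S = m1 S + m2 S).
Hypothesis hC : (k < #|C|)%N.

Lemma Dsum (i : N) (T : {set N}) : D m i T = D m1 i T + D m2 i T.
Proof. rewrite /D !hs; lra. Qed.

Lemma zero1 (S : {set N}) : m S = 0 -> m1 S = 0.
Proof. have := f_ge0 h1 S; have := f_ge0 h2 S; rewrite hs; lra. Qed.

Lemma sandwich (i : N) (T T' : {set N}) : T \subset T' -> i \notin T' -> i \in C ->
  (k <= #|T :&: C|)%N -> D m1 i T = D m1 i T'.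
Proof.
move=> TT' iT' iC hk.
have iT : i \notin T by apply: contra iT'; exact: (subsetP TT').
have e1 : D m i T = 1 by rewrite [D _ _ _]obj_val // iC hk.
have e2 : D m i T' = 1.
  rewrite [D _ _ _]obj_val // iC (leq_trans hk) //.
  by apply: subset_leq_card; apply: setSI.
have := D_mono h1 i T T' TT' iT'; have := D_mono h2 i T T' TT' iT'.
move: e1 e2; rewrite !Dsum; lra.
Qed.

Lemma sub_card (A : {set N}) n : (n <= #|A|)%N ->
  exists T : {set N}, T \subset A /\ #|T| = n.
Proof.
move=> hn; exists [set x in take n (enum A)]; split.
  by apply/subsetP=> x; rewrite inE => /mem_take; rewrite mem_enum.
rewrite cardsE (card_uniqP _) ?take_uniq ?enum_uniq // size_takel //.
by rewrite -cardE.
Qed.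

Lemma card_zero (W : {set N}) : W \subset C -> #|W| = k -> m1 W = 0.
Proof.
move=> WC cW; apply: zero1; rewrite /mCk (setIidPl WC) cW subrr.
by rewrite maxxx.
Qed.

Lemma pair_formula (V : {set N}) (p q : N) : V \subset C -> #|V| = k.+2 ->
  p \in V -> q \in V -> p != q -> m1 V = m1 (V :\ p) + m1 (V :\ q).
Proof.
move=> VC cV pV qV pq.
set W := V :\ p :\ q.
have pV' : p \notin V :\ p by rewrite !inE eqxx.
have WV : W \subset V :\ p by apply: subD1set.
have qVp : q \in V :\ p by rewrite !inE eq_sym pq qV.
have cW : #|W| = k.
  move: cV; rewrite (cardsD1 p V) pV (cardsD1 q (V :\ p)) qVp /W.
  by rewrite !add1n => -[].
have WC : W \subset C.
  by apply: subset_trans WV (subset_trans (subD1set _ _) VC).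
have pC : p \in C by apply: (subsetP VC).
have cWC : #|W :&: C| = k by rewrite (setIidPl WC).
have := sandwich p W (V :\ p) WV pV' pC (eq_leq (esym cWC)).
rewrite /D (setD1K pV) (card_zero W WC cW).
have -> : p |: W = V :\ q.
  apply/setP=> x; rewrite !inE; case: (eqVneq x p) => [->|xp] /=.
    by rewrite pV pq.
  by rewrite andbC.
lra.
Qed.


Lemma swap (U : {set N}) (x y : N) : U \subset C -> #|U| = k.+1 ->
  x \in U -> y \in C -> y \notin U -> m1 (y |: (U :\ x)) = m1 U.
Proof.
move=> UC cU xU yC yU.
set V := y |: U.
have VC : V \subset C by rewrite /V subUset sub1set yC UC.
have cV : #|V| = k.+2 by rewrite /V cardsU1 yU cU.
have : (0 < #|U :\ x|)%N by move: cU; rewrite (cardsD1 x U) xU add1n => -[->].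
case/card_gt0P=> z; rewrite !inE => /andP[zx zU].
have xy : x != y by apply: contraNneq yU => <-.
have zy : z != y by apply: contraNneq yU => <-.
have xV : x \in V by rewrite !inE xU orbT.
have yV : y \in V by rewrite !inE eqxx.
have zV : z \in V by rewrite !inE zU orbT.
have xz : x != z by rewrite eq_sym.
have yz : y != z by rewrite eq_sym.
have := pair_formula V x z VC cV xV zV xz.
have := pair_formula V y z VC cV yV zV yz.
have -> : V :\ y = U by rewrite /V setU1K.
have -> : V :\ x = y |: (U :\ x).
  apply/setP=> w; rewrite !inE; case: (eqVneq w y) => [->|wy] /=.
    by rewrite eq_sym xy.
  by [].
lra.
Qed.

Variable U0 : {set N}.
Hypotheses (U0C : U0 \subset C) (cU0 : #|U0| = k.+1).

Lemma all_eq n (U : {set N}) : #|U :\: U0| = n -> U \subset C -> #|U| = k.+1 ->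
  m1 U = m1 U0.
Proof.
elim: n U => [|n IH] U hn UC cU.
  have : U \subset U0 by rewrite -setD_eq0 -cards_eq0 hn.
  move=> sU; have /eqP -> // : U == U0.
  by rewrite eqEcard sU cU cU0 ltnSn.
have : (0 < #|U :\: U0|)%N by rewrite hn.
case/card_gt0P=> x; rewrite inE => /andP[xU0 xU].
have : exists y, (y \in U0) && (y \notin U).
  apply/existsP; apply: contraT; rewrite negb_exists => /forallP h.
  have sU : U0 \subset U.
    by apply/subsetP=> y yU0; have := h y; rewrite yU0 /= negbK.
  have e : U0 == U by rewrite eqEcard sU cU cU0 ltnSn.
  by move: xU0; rewrite (eqP e) xU.
case=> y /andP[yU0 yU].
rewrite -(swap U x y UC cU xU (subsetP U0C y yU0) yU).
apply: IH.
- have -> : (y |: (U :\ x)) :\: U0 = (U :\: U0) :\ x.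
    apply/setP=> w; rewrite !inE; case: (eqVneq w y) => [->|wy] /=.
      by rewrite yU0 /= andbF.
    by case: (w \in U0); case: (w != x).
  by move: hn; rewrite (cardsD1 x (U :\: U0)) inE xU0 xU add1n => -[].
- rewrite subUset sub1set (subsetP U0C y yU0) /=.
  exact: subset_trans (subD1set _ _) UC.
- rewrite cardsU1 !inE (negbTE yU) andbF add1n.
  by move: cU; rewrite (cardsD1 x U) xU add1n => -[->].
Qed.

Lemma claim (i : N) (T : {set N}) : i \in C -> i \notin T ->
  (k <= #|T :&: C|)%N -> D m1 i T = m1 U0.
Proof.
move=> iC iT hk.
have [T0 [T0s cT0]] := sub_card (T :&: C) k hk.
have T0T : T0 \subset T by apply: subset_trans T0s (subsetIl _ _).
have T0C : T0 \subset C by apply: subset_trans T0s (subsetIr _ _).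
have cT0C : #|T0 :&: C| = k by rewrite (setIidPl T0C).
rewrite -(sandwich i T0 T T0T iT iC (eq_leq (esym cT0C))).
rewrite /D (card_zero T0 T0C cT0) subr0.
have iT0 : i \notin T0 by apply: contra iT; exact: (subsetP T0T).
apply: (all_eq _ (i |: T0) (erefl _)).
  by rewrite subUset sub1set iC T0C.
by rewrite cardsU1 iT0 cT0.
Qed.

Lemma main_ext (S : {set N}) : m1 S = m1 U0 * m S.
Proof.
move: S; apply: set_ind'.
  rewrite (h1.1 set0) ?cards0 // (m_std.1 set0) ?cards0 //; by rewrite mulr0.
move=> i T iT IH.
have e1 : m1 (i |: T) = m1 T + D m1 i T by rewrite /D; ring.
have e : m (i |: T) = m T + D m i T by rewrite /D; ring.
rewrite e1 e IH.
have := obj_val i T iT; rewrite /obj -/(D m i T).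
case: ifP => [/andP[iC hk]|_] hD; rewrite hD.
  by rewrite (claim i T iC iT hk); ring.
have := Dsum i T; have := D_ge0 h1 i T; have := D_ge0 h2 i T.
move=> a b c; have -> : D m1 i T = 0 by lra.
ring.
Qed.

End Ext.


Section Graph.
Variable H : rel N.
Hypothesis hH : full_graph H.
Hypothesis hk : (k <= #|C|)%N.

Lemma irrH a : ~~ H a a.
Proof. apply/negP=> h; have := hH.1 a a h; by rewrite connect0. Qed.

Lemma transH a b c : H c a -> H a b -> H c b.
Proof.
move=> ca ab.
have cb : c != b.
  apply/eqP=> e; move: ca; rewrite e => ba.
  by have := hH.1 a b ab; rewrite connect1.
case/orP: (hH.2 c b cb) => // bc.
have := hH.1 c a ca.
by rewrite (connect_trans (connect1 ab) (connect1 bc)).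
Qed.

Definition fH a := #|pa H a :&: C|.

Lemma fH_lt a b : H a b -> a \in C -> (fH a < fH b)%N.
Proof.
move=> ab aC; apply: proper_card; apply/properP; split.
  apply/subsetP=> x; rewrite !inE => /andP[xa xC].
  by rewrite (transH a b x xa ab) xC.
by exists a; rewrite !inE ?ab ?aC // (negbTE (irrH a)).
Qed.

Lemma fH_bound a : a \in C -> (fH a < #|C|)%N.
Proof.
move=> aC; apply: proper_card; apply/properP; split; first exact: subsetIr.
by exists a; rewrite // !inE (negbTE (irrH a)).
Qed.

Lemma count_fH : count (fun a => k <= fH a)%N (enum C) = (#|C| - k)%N.
Proof.
rewrite -[count _ _](count_map fH (fun i => k <= i)%N).
set s := map fH (enum C).
have us : uniq s.
  rewrite map_inj_in_uniq ?enum_uniq // => a b; rewrite !mem_enum => aC bC e.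
  apply/eqP; apply: contraT => ab.
  case/orP: (hH.2 a b ab) => h.
    by have := fH_lt a b h aC; rewrite e ltnn.
  by have := fH_lt b a h bC; rewrite e ltnn.
have sub : {subset s <= iota 0 #|C|}.
  move=> v /mapP[a]; rewrite mem_enum => aC ->.
  by rewrite mem_iota add0n fH_bound.
have sz : (size (iota 0 #|C|) <= size s)%N by rewrite size_iota size_map -cardE.
have [_ eqs] := uniq_min_size us sub sz.
have pe : perm_eq s (iota 0 #|C|) by apply: uniq_perm => //; exact: iota_uniq.
rewrite (permP pe) -{1}(subnKC hk) iotaD count_cat add0n.
rewrite (@eq_in_count _ _ pred0); last first.
  by move=> x; rewrite mem_iota => /andP[_ h]; rewrite /= leqNgt h.
rewrite count_pred0 (@eq_in_count _ _ predT) ?count_predT ?size_iota //.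
by move=> x; rewrite mem_iota => /andP[h _].
Qed.
Lemma pairing_val : pairing (obj m) (eta R H) = #|C|%:R - k%:R.
Proof.
rewrite /pairing.
rewrite (eq_bigr (fun a => if (a \in C) && (k <= fH a)%N then 1 else 0)); last first.
  move=> a _.
  have aP : a \notin pa H a by rewrite inE irrH.
  case: (boolP (in_Upsilon a (pa H a))) => hU.
    rewrite (bigD1 (pa H a)) //= /eta eqxx mulr1 big1 ?addr0; first exact: obj_val aP.
    by move=> B /andP[_ /negbTE ->]; rewrite mulr0.
  rewrite big1; last first.
    move=> B hB; rewrite /eta; case: eqP => [e|_]; last by rewrite mulr0.
    by move: hU; rewrite -e hB.
  have e0 : pa H a = set0 by move: hU; rewrite /in_Upsilon aP /= negbK => /eqP.
  rewrite /fH e0 set0I cards0 (_ : (k <= 0)%N = false) ?andbF //.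
  by rewrite leqNgt k1.
rewrite -big_mkcond /= -(natrB _ hk) -count_fH -sum1_count big_enum_cond natr_sum.
by apply: eq_bigr.
Qed.

End Graph.

End S.

Theorem lemma9 (R : realFieldType) (N : finType) (C : {set N}) (k : nat) :
  (2 <= #|C|)%N -> (1 <= k <= #|C| - 1)%N ->
  [/\ extreme (mCk R C k),
      (forall (a : N) (B : {set N}), in_Upsilon a B ->
         obj (mCk R C k) a B =
           (if (a \in C) && (k <= #|B :&: C|)%N then 1 else 0)) &
      (forall H : rel N, full_graph H ->
         pairing (obj (mCk R C k)) (eta R H) = #|C|%:R - k%:R)].
Proof.
move=> hC2 /andP[k1 hk].
have kC : (k < #|C|)%N by lia.
split.
- split; first exact: (@m_std R N C k k1).
    exists C; rewrite /mCk setIid; apply: lt0r_neq0.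
    have hh : (k.+1%:R <= #|C|%:R :> R) by rewrite ler_nat.
    move: hh; rewrite -natr1.
    by have [[? ->]|[? ->]] := maxcase (#|C|%:R - k%:R : R); lra.
  move=> m1 m2 h1 h2 hs.
  have [U0 [U0C cU0]] := sub_card N C k.+1 kC.
  exists (m1 U0); split; first exact: (f_ge0 R N h1 U0).
  move=> S; exact: (@main_ext R N C k k1 m1 m2 h1 h2 hs U0 U0C cU0 S).
- move=> a B /andP[aB _]; exact: (obj_val R N C k a B aB).
- move=> H hH; apply: (@pairing_val R N C k k1 H hH); lia.
Qed.
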